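(* For every three-qubit state $\varrho$ that can be prepared in the triangle network, $\langle GHZ|\varrho|GHZ\rangle\le 1/\sqrt2$, where $|GHZ\rangle=(|000\rangle+|111\rangle)/\sqrt2$.
   Context: Triangle network: three sources $\varrho_a,\varrho_b,\varrho_c$ (finite-dimensional, arbitrary dimension), each bipartite, shared respectively by parties $BC$, $AC$, $AB$. A state can be prepared in the triangle network if $\varrho=\sum_\lambda p_\lambda\,\mathcal E_A^{(\lambda)}\otimes\mathcal E_B^{(\lambda)}\otimes\mathcal E_C^{(\lambda)}[\varrho_a\otimes\varrho_b\otimes\varrho_c]$ (subsystems suitably ordered), with a probability distribution $p_\lambda$ and quantum channels $\mathcal E_X^{(\lambda)}$ mapping the two subsystems received by party $X$ to a qubit. *)

(* Defs.v *)
From mathcomp Require Import all_boot all_order all_algebra all_field.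
Set Implicit Arguments. Unset Strict Implicit. Unset Printing Implicit Defensive.
Import Order.TTheory GRing.Theory Num.Theory.
Local Open Scope ring_scope.

Definition op (I : finType) := I -> I -> algC.

Definition psd (I : finType) (A : op I) : Prop :=
  (forall i j, A j i = (A i j)^*) /\
  forall v : I -> algC, 0 <= \sum_i \sum_j (v i)^* * A i j * v j.

Definition density (I : finType) (A : op I) : Prop :=
  psd A /\ \sum_i A i i = 1.

Definition is_channel (I J : finType) (E : op I -> op J) : Prop :=
  exists (K : finType) (kr : K -> J -> I -> algC),
    (forall i i', \sum_k \sum_j (kr k j i)^* * kr k j i' = (i == i')%:R) /\
    (forall rho j j',
       E rho j j' = \sum_k \sum_i \sum_i' kr k j i * rho i i' * (kr k j' i')^*).

Definition munit (I : finType) (i i' : I) : op I :=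
  fun j j' => ((j == i) && (j' == i'))%:R.

Definition qubit := 'I_2.
Definition qubit3 := (qubit * qubit * qubit)%type.

(* Triangle network, one fixed lambda:
   source a = (a1,a2) shared by B (gets a1) and C (gets a2),
   source b = (b1,b2) shared by A (gets b1) and C (gets b2),
   source c = (c1,c2) shared by A (gets c1) and B (gets c2).
   Output = (E_A (x) E_B (x) E_C)[rho_a (x) rho_b (x) rho_c] with subsystems
   routed as above; the tensor product of the (linear) channels is written
   through its action on matrix units. *)
Definition triangle_out (Ia1 Ia2 Ib1 Ib2 Ic1 Ic2 : finType)
  (ra : op (Ia1 * Ia2)%type) (rb : op (Ib1 * Ib2)%type) (rc : op (Ic1 * Ic2)%type)
  (EA : op (Ib1 * Ic1)%type -> op qubit) (EB : op (Ia1 * Ic2)%type -> op qubit)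
  (EC : op (Ia2 * Ib2)%type -> op qubit) : op qubit3 :=
  fun x x' =>
    \sum_(ia : (Ia1 * Ia2)%type) \sum_(ia' : (Ia1 * Ia2)%type)
    \sum_(ib : (Ib1 * Ib2)%type) \sum_(ib' : (Ib1 * Ib2)%type)
    \sum_(ic : (Ic1 * Ic2)%type) \sum_(ic' : (Ic1 * Ic2)%type)
      ra ia ia' * rb ib ib' * rc ic ic' *
      EA (munit (ib.1, ic.1) (ib'.1, ic'.1)) x.1.1 x'.1.1 *
      EB (munit (ia.1, ic.2) (ia'.1, ic'.2)) x.1.2 x'.1.2 *
      EC (munit (ia.2, ib.2) (ia'.2, ib'.2)) x.2 x'.2.

Definition triangle_preparable (rho : op qubit3) : Prop :=
  exists (da1 da2 db1 db2 dc1 dc2 : nat)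
    (ra : op ('I_da1 * 'I_da2)%type) (rb : op ('I_db1 * 'I_db2)%type)
    (rc : op ('I_dc1 * 'I_dc2)%type)
    (L : finType) (p : L -> algC)
    (EA : L -> op ('I_db1 * 'I_dc1)%type -> op qubit)
    (EB : L -> op ('I_da1 * 'I_dc2)%type -> op qubit)
    (EC : L -> op ('I_da2 * 'I_db2)%type -> op qubit),
    [/\ [/\ density ra, density rb & density rc],
        (forall l, 0 <= p l), \sum_l p l = 1,
        (forall l, [/\ is_channel (EA l), is_channel (EB l) & is_channel (EC l)]) &
        (forall x x', rho x x' =
           \sum_l p l * triangle_out ra rb rc (EA l) (EB l) (EC l) x x')].

Definition ghz (x : qubit3) : algC :=
  if (x == (ord0, ord0, ord0)) || (x == (ord_max, ord_max, ord_max))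
  then (sqrtC 2)^-1 else 0.

Definition ghz_fidelity (rho : op qubit3) : algC :=
  \sum_x \sum_x' (ghz x)^* * rho x x' * ghz x'.

(* Main.v *)
Require Import Defs.
From mathcomp Require Import all_boot all_order all_algebra all_field.
From mathcomp Require Import ring.
Import Order.TTheory GRing.Theory Num.Theory.
Local Open Scope ring_scope.

Set Implicit Arguments. Unset Strict Implicit. Unset Printing Implicit Defensive.

Local Open Scope sesquilinear_scope.

Lemma spectral_op (I : finType) (A : op I) : psd A ->
  exists (d : 'I_#|I| -> algC) (e : 'I_#|I| -> I -> algC),
   [/\ (forall r, 0 <= d r),
       (forall r r', \sum_i e r i * (e r' i)^* = (r == r')%:R),
       (forall i j, \sum_r e r i * (e r j)^* = (i == j)%:R) &
       (forall i j, A i j = \sum_r d r * e r i * (e r j)^*)].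
Proof.
move=> [Aherm Apos].
pose M : 'M[algC]_#|I| := \matrix_(x, y) A (enum_val x) (enum_val y).
have Mh : M \is hermsymmx.
  apply/is_hermitianmxP; rewrite expr0 scale1r.
  by apply/matrixP => x y; rewrite !mxE Aherm.
have /orthomx_spectralP ME := hermitian_normalmx Mh.
set P := spectralmx M in ME; set D := spectral_diag M in ME.
have Pu : P \is unitarymx := spectral_unitarymx M.
have PPt : P *m P^t* = 1%:M by apply/unitarymxP.
have PtP : P^t* *m P = 1%:M by apply: mulmx1C.
rewrite invmx_unitary // in ME.
pose e r i := (P r (enum_rank i))^*.
have Aeq : forall i j, A i j = \sum_r D 0 r * e r i * (e r j)^*.
  move=> i j.
  have := congr1 (fun N : 'M_#|I| => N (enum_rank i) (enum_rank j)) ME.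
  rewrite /= mxE !enum_rankK => ->.
  rewrite !mxE; apply: eq_bigr => r _.
  rewrite mul_mx_diag !mxE /e conjCK.
  by rewrite [_ * D 0 r]mulrC.
exists (fun r => D 0 r), e; split => //.
- move=> r.
  have -> : D 0 r = \sum_i \sum_j (e r i)^* * A i j * e r j.
    transitivity (\sum_i \sum_j (e r i)^* * (\sum_q D 0 q * e q i * (e q j)^*) * e r j).
      have orth : forall q q', \sum_i e q i * (e q' i)^* = (q == q')%:R.
        move=> q q'; have := congr1 (fun N : 'M_#|I| => N q' q) PPt.
        rewrite !mxE /= eq_sym => <-.
        rewrite (reindex (@enum_val _ (mem I))) /=; last first.
          by exists enum_rank => x _; rewrite ?enum_valK ?enum_rankK.
        by apply: eq_bigr => x _; rewrite /e enum_valK conjCK mulrC !mxE.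
      transitivity (\sum_q D 0 q * (\sum_i (e r i)^* * e q i) * (\sum_j (e q j)^* * e r j)).
        have h2 : \sum_i (e r i)^* * e r i = 1.
          transitivity ((r == r)%:R : algC); last by rewrite eqxx.
          by rewrite -orth; apply: eq_bigr => i _; rewrite mulrC.
        rewrite (bigD1 r) //= h2 mulr1 mulr1 [X in _ + X]big1 ?addr0 //.
        move=> q nq; have h := orth q r; rewrite (negbTE nq) in h.
        have -> : \sum_j (e q j)^* * e r j = (\sum_i e q i * (e r i)^*)^*.
          by rewrite rmorph_sum; apply: eq_bigr => j _; rewrite rmorphM /= conjCK mulrC.
        rewrite h conjC0.
        by rewrite mulr0.
      transitivity (\sum_q \sum_i \sum_j D 0 q * ((e r i)^* * e q i) * ((e q j)^* * e r j)).
        apply: eq_bigr => q _; rewrite -mulrA big_distrlr mulr_sumr; apply: eq_bigr => i _.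
        by rewrite mulr_sumr; apply: eq_bigr => j _; rewrite /= mulrA.
      rewrite exchange_big; apply: eq_bigr => i _; rewrite exchange_big; apply: eq_bigr => j _.
      rewrite mulr_sumr mulr_suml; apply: eq_bigr => q _; ring.
    by apply: eq_bigr => i _; apply: eq_bigr => j _; rewrite Aeq.
  exact: Apos.
- move=> r r'.
  have := congr1 (fun N : 'M_#|I| => N r' r) PPt.
  rewrite !mxE /= eq_sym => <-.
  rewrite (reindex (@enum_val _ (mem I))) /=; last first.
    by exists enum_rank => x _; rewrite ?enum_valK ?enum_rankK.
  apply: eq_bigr => x _; rewrite /e enum_valK conjCK mulrC !mxE //.
- move=> i j.
  have := congr1 (fun N : 'M_#|I| => N (enum_rank i) (enum_rank j)) PtP.
  rewrite !mxE (inj_eq enum_rank_inj) => <-.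
  by apply: eq_bigr => r _; rewrite /e !mxE conjCK.
Qed.

Local Close Scope sesquilinear_scope.

Lemma ge0_conj (x : algC) : 0 <= x -> x^* = x.
Proof. by move=> /ger0_real /conj_Creal. Qed.

Lemma sum_ge0 (I : finType) (F : I -> algC) : (forall i, 0 <= F i) -> 0 <= \sum_i F i.
Proof. by move=> h; apply: sumr_ge0 => i _; apply: h. Qed.

Lemma wCS (I : finType) (w a b : I -> algC) : (forall i, 0 <= w i) ->
  (\sum_i w i * a i * (b i)^*) * (\sum_i w i * a i * (b i)^*)^*
  <= (\sum_i w i * (a i * (a i)^*)) * (\sum_i w i * (b i * (b i)^*)).
Proof.
move=> hw.
set A := \sum_i w i * (a i * (a i)^*); set B := \sum_i w i * (b i * (b i)^*).
set S := \sum_i w i * a i * (b i)^*.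
have Sc : S^* = \sum_i w i * (a i)^* * b i.
  by rewrite rmorph_sum; apply: eq_bigr => i _; rewrite !rmorphM /= conjCK ge0_conj.
pose c i j := a i * b j - a j * b i.
have E : \sum_i \sum_j w i * w j * (c i j * (c i j)^*) = 2%:R * (A * B - S * S^*).
  have -> : 2%:R * (A * B - S * S^*) = A * B + B * A - S * S^* - S^* * S.
    by rewrite mulr_natl mulr2n; ring.
  rewrite Sc /A /B /S !big_distrlr /= -big_split -!sumrB /=.
  apply: eq_bigr => i _; rewrite -big_split -!sumrB /=; apply: eq_bigr => j _.
  rewrite /c !rmorphB !rmorphM /=; ring.
have : 0 <= \sum_i \sum_j w i * w j * (c i j * (c i j)^*).
  apply: sum_ge0 => i; apply: sum_ge0 => j.
  by apply: mulr_ge0; [apply: mulr_ge0; apply: hw | apply: mul_conjC_ge0].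
rewrite E pmulr_rge0 ?ltr0n // subr_ge0 //.
Qed.

Definition nrm2 (I : finType) (u : I -> algC) := \sum_i u i * (u i)^*.

Lemma nrm2_ge0 (I : finType) (u : I -> algC) : 0 <= nrm2 u.
Proof. by apply: sum_ge0 => i; apply: mul_conjC_ge0. Qed.

Lemma CS (I : finType) (a b : I -> algC) :
  (\sum_i a i * (b i)^*) * (\sum_i a i * (b i)^*)^* <= nrm2 a * nrm2 b.
Proof.
have := @wCS I (fun=> 1) a b (fun=> ler01).
rewrite /nrm2.
have e1 : \sum_i 1 * a i * (b i)^* = \sum_i a i * (b i)^*.
  by apply: eq_bigr => i _; rewrite mul1r.
have e2 : forall c : I -> algC, \sum_i 1 * (c i * (c i)^*) = \sum_i c i * (c i)^*.
  by move=> c; apply: eq_bigr => i _; rewrite mul1r.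
by rewrite e1 !e2.
Qed.

Lemma sq_le (X Y : algC) : 0 <= X -> 0 <= Y -> X * X <= Y * X -> X <= Y.
Proof.
move=> hX hY; have [->|nX] := eqVneq X 0; first by [].
have pX : 0 < X by rewrite lt_def nX hX.
by rewrite ler_pM2r.
Qed.

Lemma real_sq (x : algC) : 0 <= x -> x * x^* = x * x.
Proof. by move=> h; rewrite ge0_conj. Qed.

Definition orthf (J U : finType) (phi : J -> U -> algC) :=
  (forall I I', \sum_u phi I u * (phi I' u)^* = (I == I')%:R * nrm2 (phi I)) /\
  (forall I, nrm2 (phi I) <= 1).

Lemma bessel (J U : finType) (phi : J -> U -> algC) (Y : U -> algC) : orthf phi ->
  \sum_I (\sum_u Y u * (phi I u)^*) * (\sum_u Y u * (phi I u)^*)^* <= nrm2 Y.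
Proof.
move=> [horth hle].
pose c I := \sum_u Y u * (phi I u)^*.
pose S := \sum_I c I * (c I)^*.
pose Z u := \sum_I c I * phi I u.
have S0 : 0 <= S by apply: sum_ge0 => I; apply: mul_conjC_ge0.
have hYZ : \sum_u Y u * (Z u)^* = S.
  rewrite /S /Z; under eq_bigr => u _ do rewrite rmorph_sum mulr_sumr.
  rewrite exchange_big; apply: eq_bigr => I _; rewrite /c mulr_suml.
  by apply: eq_bigr => u _; rewrite rmorphM /=; ring.
have hZ : nrm2 Z <= S.
  have -> : nrm2 Z = \sum_I c I * (c I)^* * nrm2 (phi I).
    rewrite /nrm2 /Z.
    transitivity (\sum_I \sum_I' c I * (c I')^* * \sum_u phi I u * (phi I' u)^*).
      under eq_bigr => u _ do rewrite rmorph_sum big_distrlr /=.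
      rewrite exchange_big; apply: eq_bigr => I _; rewrite exchange_big.
      apply: eq_bigr => I' _; rewrite mulr_sumr; apply: eq_bigr => u _.
      by rewrite rmorphM /=; ring.
    apply: eq_bigr => I _; rewrite (bigD1 I) //= horth eqxx mul1r [X in _ + X]big1 ?addr0 //.
    by move=> I' nI; rewrite horth eq_sym (negbTE nI) mul0r mulr0.
  apply: ler_sum => I _; rewrite -[X in _ <= X]mulr1.
  by apply: ler_wpM2l; [apply: mul_conjC_ge0 | apply: hle].
have := CS Y Z; rewrite hYZ real_sq // => h.
apply: sq_le => //; first exact: nrm2_ge0.
apply: (le_trans h); apply: ler_wpM2l => //; exact: nrm2_ge0.
Qed.

Lemma sum_delta (I : finType) (i0 : I) (F : I -> algC) :
  \sum_i (i == i0)%:R * F i = F i0.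
Proof.
rewrite (bigD1 i0) //= eqxx mul1r big1 ?addr0 //.
by move=> i /negbTE ->; rewrite mul0r.
Qed.

Lemma sum_delta' (I : finType) (i0 : I) (F : I -> algC) :
  \sum_i (i0 == i)%:R * F i = F i0.
Proof. by rewrite -(sum_delta i0); apply: eq_bigr => i _; rewrite eq_sym. Qed.

Lemma kraus_contr (K U : finType) (kr : K -> qubit -> U -> algC)
  (hc : forall i i', \sum_k \sum_j (kr k j i)^* * kr k j i' = (i == i')%:R)
  (s : qubit) (z : K -> algC) :
  nrm2 (fun u => \sum_k z k * (kr k s u)^*) <= nrm2 z.
Proof.
set Y := fun u => _.
pose zt (p : K * qubit) := (p.2 == s)%:R * z p.1.
pose W (p : K * qubit) := \sum_u Y u * kr p.1 p.2 u.
have hY : forall u, Y u = \sum_p zt p * (kr p.1 p.2 u)^*.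
  move=> u; rewrite /Y -(pair_bigA _ (fun k j => zt (k, j) * (kr k j u)^*)) /=.
  apply: eq_bigr => k _; rewrite /zt /=.
  under eq_bigr => j _ do rewrite -mulrA.
  by rewrite sum_delta.
have e1 : \sum_p zt p * (W p)^* = nrm2 Y.
  rewrite /W /nrm2.
  under eq_bigr => p _ do rewrite rmorph_sum mulr_sumr.
  rewrite exchange_big; apply: eq_bigr => u _.
  transitivity ((Y u)^* * \sum_p zt p * (kr p.1 p.2 u)^*); last by rewrite -hY mulrC.
  rewrite mulr_sumr; apply: eq_bigr => p _; rewrite rmorphM /=; ring.
have e2 : nrm2 W = nrm2 Y.
  rewrite /nrm2 /W.
  transitivity (\sum_u \sum_u' Y u * (Y u')^* * \sum_p (kr p.1 p.2 u')^* * kr p.1 p.2 u).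
    under eq_bigr => p _ do rewrite rmorph_sum big_distrlr /=.
    rewrite exchange_big; apply: eq_bigr => u _; rewrite exchange_big.
    apply: eq_bigr => u' _; rewrite mulr_sumr; apply: eq_bigr => p _.
    rewrite rmorphM /=; ring.
  apply: eq_bigr => u _.
  under eq_bigr => u' _ do rewrite -(pair_bigA _ (fun k j => (kr k j u')^* * kr k j u)) /= hc.
  rewrite (bigD1 u) //= eqxx mulr1 [X in _ + X]big1 ?addr0 //.
  by move=> u' /negbTE ->; rewrite mulr0.
have e3 : nrm2 zt = nrm2 z.
  rewrite /nrm2 -(pair_bigA _ (fun k j => zt (k, j) * (zt (k, j))^*)) /=.
  apply: eq_bigr => k _; rewrite /zt /=.
  rewrite (bigD1 s) //= eqxx !mul1r [X in _ + X]big1 ?addr0 // => j /negbTE ->.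
  by rewrite !mul0r.
have := CS zt W; rewrite e1 e2 e3 real_sq ?nrm2_ge0 // => h.
apply: sq_le; [exact: nrm2_ge0 | exact: nrm2_ge0 | by rewrite mulrC].
Qed.

Lemma real_sq_ge0 (x : algC) : x \is Num.real -> 0 <= x * x.
Proof. by move=> /conj_Creal h; rewrite -{2}h mul_conjC_ge0. Qed.

Lemma amgm2 (w1 w2 X : algC) : 0 <= w1 -> 0 <= w2 -> 0 <= X ->
  w1 * w2 * X <= (w1 * w1 * X + w2 * w2 * X) / 2%:R.
Proof.
move=> h1 h2 hX.
rewrite ler_pdivlMr ?ltr0n // -subr_ge0.
have -> : (w1 * w1 * X + w2 * w2 * X) - w1 * w2 * X * 2%:R = ((w1 - w2) * (w1 - w2)) * X.
  by rewrite mulr_natr mulr2n; ring.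
apply: mulr_ge0 => //; apply: real_sq_ge0; apply: realB; exact: ger0_real.
Qed.

Definition amp (K U J : finType) (kap : K -> U -> algC) (phi : J -> U -> algC) k I :=
  \sum_u kap k u * phi I u.
Definition gram (K U J : finType) (kap : K -> U -> algC) (phi : J -> U -> algC) I I' :=
  \sum_k amp kap phi k I * (amp kap phi k I')^*.

Lemma party (K U J : finType) (kap : K -> U -> algC)
  (hcontr : forall z : K -> algC, nrm2 (fun u => \sum_k z k * (kap k u)^*) <= nrm2 z)
  (phi : J -> U -> algC) (hphi : orthf phi) (w : J -> algC) (hw : forall I, 0 <= w I) :
  \sum_I \sum_I' w I * w I' * (gram kap phi I I' * (gram kap phi I I')^*)
   <= \sum_I w I * w I * gram kap phi I I.
Proof.
set a := amp kap phi; set Ah := gram kap phi.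
have step1 : forall I, \sum_I' Ah I I' * (Ah I I')^* <= Ah I I.
  move=> I.
  pose z k := a k I.
  pose Y u := \sum_k z k * (kap k u)^*.
  have hA : forall I', Ah I I' = \sum_u Y u * (phi I' u)^*.
    move=> I'; rewrite /Ah /gram /Y /z /a /amp.
    under eq_bigr => k _ do rewrite rmorph_sum mulr_sumr.
    rewrite exchange_big; apply: eq_bigr => u _; rewrite mulr_suml.
    by apply: eq_bigr => k _; rewrite rmorphM /= mulrA.
  under eq_bigr => I' _ do rewrite hA.
  apply: (le_trans (bessel Y hphi)); apply: (le_trans (hcontr z)).
  by rewrite /nrm2 /Ah /gram.
have sym : forall I I', Ah I' I * (Ah I' I)^* = Ah I I' * (Ah I I')^*.
  move=> I I'; have -> : Ah I' I = (Ah I I')^*.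
    by rewrite /Ah /gram rmorph_sum; apply: eq_bigr => k _; rewrite rmorphM /= conjCK mulrC.
  by rewrite conjCK mulrC.
pose X I I' := Ah I I' * (Ah I I')^*.
have X0 : forall I I', 0 <= X I I' by move=> I I'; apply: mul_conjC_ge0.
apply: (@le_trans _ _ (\sum_I \sum_I' (w I * w I * X I I' + w I' * w I' * X I I') / 2%:R)).
  by apply: ler_sum => I _; apply: ler_sum => I' _; apply: amgm2; [exact: hw | exact: hw | exact: X0].
have -> : \sum_I \sum_I' (w I * w I * X I I' + w I' * w I' * X I I') / 2%:R
        = \sum_I \sum_I' w I * w I * X I I'.
  under eq_bigr => I _ do rewrite -mulr_suml big_split /=.
  rewrite -mulr_suml big_split /=.
  have -> : \sum_I \sum_I' w I' * w I' * X I I' = \sum_I \sum_I' w I * w I * X I I'.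
    rewrite exchange_big; apply: eq_bigr => I _; apply: eq_bigr => I' _.
    by rewrite /X sym.
  by rewrite -mulr2n -[X in X / _]mulr_natr mulfK // pnatr_eq0.
apply: ler_sum => I _; rewrite -mulr_sumr; apply: ler_wpM2l.
  by apply: real_sq_ge0; apply: ger0_real.
exact: step1.
Qed.

Lemma mul_ge0_conj (x : algC) (a : algC) : 0 <= x -> (x * a)^* = x * a^*.
Proof. by move=> h; rewrite rmorphM /= ge0_conj. Qed.

Lemma LW (X Y Z : finType) (wx : X -> algC) (wy : Y -> algC) (wz : Z -> algC)
  (hx : forall x, 0 <= wx x) (hy : forall y, 0 <= wy y) (hz : forall z, 0 <= wz z)
  (f : Y -> Z -> algC) (g : X -> Z -> algC) (h : X -> Y -> algC) :
  (\sum_x \sum_y \sum_z wx x * wy y * wz z * f y z * g x z * h x y) *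
  (\sum_x \sum_y \sum_z wx x * wy y * wz z * f y z * g x z * h x y)^*
  <= (\sum_y \sum_z wy y * wz z * (f y z * (f y z)^*)) *
     (\sum_x \sum_z wx x * wz z * (g x z * (g x z)^*)) *
     (\sum_x \sum_y wx x * wy y * (h x y * (h x y)^*)).
Proof.
pose S x y := \sum_z wz z * f y z * g x z.
pose F y := \sum_z wz z * (f y z * (f y z)^*).
pose G x := \sum_z wz z * (g x z * (g x z)^*).
have F0 : forall y, 0 <= F y.
  by move=> y; apply: sum_ge0 => z; apply: mulr_ge0 => //; apply: mul_conjC_ge0.
have G0 : forall x, 0 <= G x.
  by move=> x; apply: sum_ge0 => z; apply: mulr_ge0 => //; apply: mul_conjC_ge0.
have hS : forall x y, S x y * (S x y)^* <= F y * G x.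
  move=> x y; have := wCS (fun z => f y z) (fun z => (g x z)^*) hz.
  rewrite /S /F /G.
  have -> : \sum_i wz i * f y i * ((g x i)^*)^* = \sum_z wz z * f y z * g x z.
    by apply: eq_bigr => z _; rewrite conjCK.
  have -> : \sum_i wz i * ((g x i)^* * ((g x i)^*)^*) = \sum_z wz z * (g x z * (g x z)^*).
    by apply: eq_bigr => z _; rewrite conjCK [_^* * _]mulrC.
  by [].
pose w (p : X * Y) := wx p.1 * wy p.2.
have w0 : forall p, 0 <= w p by move=> p; apply: mulr_ge0.
have hT : \sum_x \sum_y \sum_z wx x * wy y * wz z * f y z * g x z * h x y
        = \sum_p w p * h p.1 p.2 * ((S p.1 p.2)^*)^*.
  rewrite -(pair_bigA _ (fun x y => w (x, y) * h x y * ((S x y)^*)^*)) /=.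
  apply: eq_bigr => x _; apply: eq_bigr => y _.
  rewrite conjCK /S /w /= mulr_sumr; apply: eq_bigr => z _; ring.
rewrite hT.
apply: (le_trans (wCS (fun p => h p.1 p.2) (fun p => (S p.1 p.2)^*) w0)).
have e1 : \sum_p w p * (h p.1 p.2 * (h p.1 p.2)^*)
        = \sum_x \sum_y wx x * wy y * (h x y * (h x y)^*).
  by rewrite -(pair_bigA _ (fun x y => wx x * wy y * (h x y * (h x y)^*))).
have e2 : \sum_p w p * ((S p.1 p.2)^* * ((S p.1 p.2)^*)^*)
        = \sum_x \sum_y wx x * wy y * (S x y * (S x y)^*).
  have -> : \sum_p w p * ((S p.1 p.2)^* * ((S p.1 p.2)^*)^*)
          = \sum_p w p * (S p.1 p.2 * (S p.1 p.2)^*).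
    by apply: eq_bigr => p _; rewrite conjCK [_^* * _]mulrC.
  by rewrite -(pair_bigA _ (fun x y => wx x * wy y * (S x y * (S x y)^*))).
rewrite e1 e2 mulrC; apply: ler_wpM2r.
  apply: sum_ge0 => x; apply: sum_ge0 => y.
  by apply: mulr_ge0; [apply: mulr_ge0 | apply: mul_conjC_ge0].
apply: (@le_trans _ _ (\sum_x \sum_y wx x * wy y * (F y * G x))).
  apply: ler_sum => x _; apply: ler_sum => y _.
  by apply: ler_wpM2l; [apply: mulr_ge0 | apply: hS].
rewrite mulrC big_distrlr /=; apply: ler_sum => x _.
apply: ler_sum => y _.
have h1 : \sum_z wx x * wz z * (g x z * (g x z)^*) = wx x * G x.
  by rewrite /G mulr_sumr; apply: eq_bigr => z _; ring.
have h2 : \sum_z wy y * wz z * (f y z * (f y z)^*) = wy y * F y.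
  by rewrite /F mulr_sumr; apply: eq_bigr => z _; ring.
rewrite h1 h2 le_eqVlt; apply/orP; left; apply/eqP; ring.
Qed.

Lemma sum_pair (A B : finType) (F : A -> B -> algC) :
  \sum_(p : A * B) F p.1 p.2 = \sum_a \sum_b F a b.
Proof. by rewrite pair_bigA. Qed.

Lemma orthf_prod (R1 R2 U1 U2 : finType) (e : R1 -> U1 -> algC) (f : R2 -> U2 -> algC) :
  orthf e -> orthf f ->
  orthf (fun (I : R1 * R2) (u : U1 * U2) => e I.1 u.1 * f I.2 u.2).
Proof.
move=> [he1 he2] [hf1 hf2].
have key : forall I I' : R1 * R2,
    \sum_(u : U1 * U2) e I.1 u.1 * f I.2 u.2 * (e I'.1 u.1 * f I'.2 u.2)^*
    = (\sum_u1 e I.1 u1 * (e I'.1 u1)^*) * (\sum_u2 f I.2 u2 * (f I'.2 u2)^*).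
  move=> I I'.
  rewrite (sum_pair (fun u1 u2 => e I.1 u1 * f I.2 u2 * (e I'.1 u1 * f I'.2 u2)^*)).
  rewrite big_distrlr /=; apply: eq_bigr => u1 _; apply: eq_bigr => u2 _.
  rewrite rmorphM /=; ring.
have nrm : forall I : R1 * R2, nrm2 (fun u : U1 * U2 => e I.1 u.1 * f I.2 u.2)
                               = nrm2 (e I.1) * nrm2 (f I.2).
  by move=> I; rewrite /nrm2 key.
split.
  move=> [r1 r2] [r1' r2']; rewrite key nrm he1 hf1 /=.
  rewrite xpair_eqE; case: (r1 =P r1') => _; case: (r2 =P r2') => _ /=;
    rewrite ?mul1r ?mul0r ?mulr0 //.
move=> I; rewrite nrm -[1]mulr1; apply: ler_pM => //; exact: nrm2_ge0.
Qed.

Lemma reindex4 (R1 R2 : finType) (F : R1 -> R1 -> R2 -> R2 -> algC) :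
  \sum_(y : R1 * R1) \sum_(z : R2 * R2) F y.1 y.2 z.1 z.2 =
  \sum_(I : R1 * R2) \sum_(I' : R1 * R2) F I.1 I'.1 I.2 I'.2.
Proof.
rewrite (sum_pair (fun t t' => \sum_(z : R2 * R2) F t t' z.1 z.2)).
rewrite (sum_pair (fun t v => \sum_(I' : R1 * R2) F t I'.1 v I'.2)).
apply: eq_bigr => t _.
under eq_bigr => t' _ do rewrite (sum_pair (fun v v' => F t t' v v')).
under [RHS]eq_bigr => v _ do rewrite (sum_pair (fun t' v' => F t t' v v')).
by rewrite exchange_big.
Qed.

Lemma flat3 (A B C : finType) (F : A -> B -> C -> algC) :
  \sum_a \sum_b \sum_c F a b c = \sum_(q : A * B * C) F q.1.1 q.1.2 q.2.
Proof.
symmetry; rewrite -(pair_bigA _ (fun (p : A * B) c => F p.1 p.2 c)) /=.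
by rewrite -(pair_bigA _ (fun a b => \sum_c F a b c)).
Qed.

Definition phiP (R1 R2 U1 U2 : finType) (e : R1 -> U1 -> algC) (f : R2 -> U2 -> algC)
  (I : R1 * R2) (u : U1 * U2) := e I.1 u.1 * f I.2 u.2.

Definition qP (K U R1 R2 : finType) (kap : K -> U -> algC) (s1 : R1 -> algC) (s2 : R2 -> algC)
  (phi : R1 * R2 -> U -> algC) :=
  \sum_(I : R1 * R2) (s1 I.1 * s2 I.2) * (s1 I.1 * s2 I.2) * gram kap phi I I.

Lemma expandPhi (K1 K2 K3 Q : finType) (G : K1 -> K2 -> K3 -> Q -> algC) :
  \sum_k1 \sum_k2 \sum_k3 (\sum_q G k1 k2 k3 q) * (\sum_q G k1 k2 k3 q)^*
  = \sum_q \sum_q' \sum_k1 \sum_k2 \sum_k3 G k1 k2 k3 q * (G k1 k2 k3 q')^*.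
Proof.
rewrite (flat3 (fun k1 k2 k3 => (\sum_q G k1 k2 k3 q) * (\sum_q G k1 k2 k3 q)^*)).
transitivity (\sum_q \sum_q' \sum_(k : K1 * K2 * K3) G k.1.1 k.1.2 k.2 q * (G k.1.1 k.1.2 k.2 q')^*).
  under eq_bigr => k _ do rewrite rmorph_sum big_distrlr /=.
  by rewrite exchange_big; apply: eq_bigr => q _; rewrite exchange_big.
apply: eq_bigr => q _; apply: eq_bigr => q' _.
by rewrite (flat3 (fun k1 k2 k3 => G k1 k2 k3 q * (G k1 k2 k3 q')^*)).
Qed.

Lemma reindex_qq (Ra Rb Rc : finType) (H : Ra * Rb * Rc -> Ra * Rb * Rc -> algC) :
  \sum_q \sum_q' H q q' =
  \sum_(x : Ra * Ra) \sum_(y : Rb * Rb) \sum_(z : Rc * Rc)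
      H (x.1, y.1, z.1) (x.2, y.2, z.2).
Proof.
rewrite (flat3 (fun x y z => H (x.1, y.1, z.1) (x.2, y.2, z.2))).
rewrite (pair_bigA _ H).
pose sig (w : Ra * Ra * (Rb * Rb) * (Rc * Rc)) :=
  ((w.1.1.1, w.1.2.1, w.2.1), (w.1.1.2, w.1.2.2, w.2.2)).
pose sigi (p : Ra * Rb * Rc * (Ra * Rb * Rc)) :=
  ((p.1.1.1, p.2.1.1), (p.1.1.2, p.2.1.2), (p.1.2, p.2.2)).
rewrite (reindex sig) /=; last first.
  by exists sigi => [[[[? ?] [? ?]] [? ?]]|[[[? ?] ?] [[? ?] ?]]] _.
by apply: eq_bigr => [[[[? ?] [? ?]] [? ?]]].
Qed.

Lemma sum3_prod (A B D : finType) (k : algC) (F : A -> algC) (G : B -> algC) (H : D -> algC) :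
  \sum_a \sum_b \sum_d k * F a * G b * H d = k * (\sum_a F a) * (\sum_b G b) * (\sum_d H d).
Proof.
under eq_bigr => a _ do under eq_bigr => b _ do rewrite -mulr_sumr.
under eq_bigr => a _ do rewrite -mulr_suml -mulr_sumr.
by rewrite -!mulr_suml -mulr_sumr.
Qed.

Lemma gram_prod3 (K1 K2 K3 U1 U2 U3 J1 J2 J3 : finType)
  (k1 : K1 -> U1 -> algC) (p1 : J1 -> U1 -> algC)
  (k2 : K2 -> U2 -> algC) (p2 : J2 -> U2 -> algC)
  (k3 : K3 -> U3 -> algC) (p3 : J3 -> U3 -> algC) (c c' : algC) i1 i1' i2 i2' i3 i3' :
  \sum_a \sum_b \sum_d (c * amp k1 p1 a i1 * amp k2 p2 b i2 * amp k3 p3 d i3) *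
                      (c' * amp k1 p1 a i1' * amp k2 p2 b i2' * amp k3 p3 d i3')^*
  = c * c'^* * gram k1 p1 i1 i1' * gram k2 p2 i2 i2' * gram k3 p3 i3 i3'.
Proof.
rewrite /gram -sum3_prod; apply: eq_bigr => a _; apply: eq_bigr => b _.
apply: eq_bigr => d _; rewrite !rmorphM /=; ring.
Qed.

Lemma party_q (K U R1 R2 : finType) (kap : K -> U -> algC)
  (hc : forall z : K -> algC, nrm2 (fun u => \sum_k z k * (kap k u)^*) <= nrm2 z)
  (s1 : R1 -> algC) (s2 : R2 -> algC) (h1 : forall r, 0 <= s1 r) (h2 : forall r, 0 <= s2 r)
  (phi : R1 * R2 -> U -> algC) (hphi : orthf phi) :
  \sum_(y : R1 * R1) \sum_(z : R2 * R2) (s1 y.1 * s1 y.2) * (s2 z.1 * s2 z.2) *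
     (gram kap phi (y.1, z.1) (y.2, z.2) * (gram kap phi (y.1, z.1) (y.2, z.2))^*)
  <= qP kap s1 s2 phi.
Proof.
rewrite (reindex4 (fun t t' v v' => (s1 t * s1 t') * (s2 v * s2 v') *
     (gram kap phi (t, v) (t', v') * (gram kap phi (t, v) (t', v'))^*))).
have := @party K U (R1 * R2)%type kap hc phi hphi (fun I => s1 I.1 * s2 I.2)
  (fun I => mulr_ge0 (h1 _) (h2 _)).
rewrite /qP => h; apply: (le_trans _ h); rewrite le_eqVlt; apply/orP; left; apply/eqP.
apply: eq_bigr => I _; apply: eq_bigr => I' _.
by rewrite -!surjective_pairing; ring.
Qed.

Definition contr (K U : finType) (kap : K -> U -> algC) :=
  forall z : K -> algC, nrm2 (fun u => \sum_k z k * (kap k u)^*) <= nrm2 z.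

Lemma finner (A1 A2 B1 B2 C1 C2 Ra Rb Rc KA KB KC : finType)
  (sa : Ra -> algC) (ea : Ra -> A1 -> algC) (fa : Ra -> A2 -> algC)
  (sb : Rb -> algC) (eb : Rb -> B1 -> algC) (fb : Rb -> B2 -> algC)
  (sc : Rc -> algC) (ec : Rc -> C1 -> algC) (fc : Rc -> C2 -> algC)
  (kA : KA -> B1 * C1 -> algC) (kB : KB -> A1 * C2 -> algC) (kC : KC -> A2 * B2 -> algC)
  (hsa : forall r, 0 <= sa r) (hsb : forall r, 0 <= sb r) (hsc : forall r, 0 <= sc r)
  (hea : orthf ea) (hfa : orthf fa) (heb : orthf eb) (hfb : orthf fb)
  (hec : orthf ec) (hfc : orthf fc)
  (cA : contr kA) (cB : contr kB) (cC : contr kC) (P : algC) :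
  P = \sum_k1 \sum_k2 \sum_k3
     (\sum_(q : Ra * Rb * Rc) sa q.1.1 * sb q.1.2 * sc q.2 * amp kA (phiP eb ec) k1 (q.1.2, q.2)
         * amp kB (phiP ea fc) k2 (q.1.1, q.2) * amp kC (phiP fa fb) k3 (q.1.1, q.1.2)) *
     (\sum_(q : Ra * Rb * Rc) sa q.1.1 * sb q.1.2 * sc q.2 * amp kA (phiP eb ec) k1 (q.1.2, q.2)
         * amp kB (phiP ea fc) k2 (q.1.1, q.2) * amp kC (phiP fa fb) k3 (q.1.1, q.1.2))^* ->
  P * P <= qP kA sb sc (phiP eb ec) * qP kB sa sc (phiP ea fc) * qP kC sa sb (phiP fa fb).
Proof.
move=> hP.
have P0 : 0 <= P.
  by rewrite hP; apply: sum_ge0 => k1; apply: sum_ge0 => k2; apply: sum_ge0 => k3; apply: mul_conjC_ge0.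
pose f (y : Rb * Rb) (z : Rc * Rc) := gram kA (phiP eb ec) (y.1, z.1) (y.2, z.2).
pose g (x : Ra * Ra) (z : Rc * Rc) := gram kB (phiP ea fc) (x.1, z.1) (x.2, z.2).
pose h (x : Ra * Ra) (y : Rb * Rb) := gram kC (phiP fa fb) (x.1, y.1) (x.2, y.2).
pose wx (x : Ra * Ra) := sa x.1 * sa x.2.
pose wy (y : Rb * Rb) := sb y.1 * sb y.2.
pose wz (z : Rc * Rc) := sc z.1 * sc z.2.
have PT : P = \sum_x \sum_y \sum_z wx x * wy y * wz z * f y z * g x z * h x y.
  rewrite hP expandPhi.
  under eq_bigr => q _ do under eq_bigr => q' _ do rewrite gram_prod3.
  rewrite (reindex_qq (fun q q' => sa q.1.1 * sb q.1.2 * sc q.2 *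
      (sa q'.1.1 * sb q'.1.2 * sc q'.2)^* *
      gram kA (phiP eb ec) (q.1.2, q.2) (q'.1.2, q'.2) *
      gram kB (phiP ea fc) (q.1.1, q.2) (q'.1.1, q'.2) *
      gram kC (phiP fa fb) (q.1.1, q.1.2) (q'.1.1, q'.1.2))) /=.
  apply: eq_bigr => x _; apply: eq_bigr => y _; apply: eq_bigr => z _.
  rewrite !rmorphM /= !ge0_conj // /wx /wy /wz /f /g /h; ring.
have hL := LW (fun x => mulr_ge0 (hsa x.1) (hsa x.2)) (fun y => mulr_ge0 (hsb y.1) (hsb y.2))
   (fun z => mulr_ge0 (hsc z.1) (hsc z.2)) f g h.
rewrite -PT real_sq // in hL.
apply: (le_trans hL).
have nA := party_q cA hsb hsc (orthf_prod heb hec).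
have nB := party_q cB hsa hsc (orthf_prod hea hfc).
have nC := party_q cC hsa hsb (orthf_prod hfa hfb).
have g0 : forall (X Y : finType) (a : X -> algC) (b : Y -> algC) (F : X -> Y -> algC),
    (forall x, 0 <= a x) -> (forall y, 0 <= b y) ->
    0 <= \sum_x \sum_y a x * b y * (F x y * (F x y)^*).
  move=> X Y a b F ha hb; apply: sum_ge0 => x; apply: sum_ge0 => y.
  by apply: mulr_ge0; [apply: mulr_ge0 | apply: mul_conjC_ge0].
have NF0 : 0 <= \sum_y \sum_z wy y * wz z * (f y z * (f y z)^*).
  by apply: g0 => ?; apply: mulr_ge0.
have NG0 : 0 <= \sum_x \sum_z wx x * wz z * (g x z * (g x z)^*).
  by apply: g0 => ?; apply: mulr_ge0.
have NH0 : 0 <= \sum_x \sum_y wx x * wy y * (h x y * (h x y)^*).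
  by apply: g0 => ?; apply: mulr_ge0.
apply: ler_pM => //; first exact: mulr_ge0.
by apply: ler_pM.
Qed.

Lemma nrm2_eq0 (I : finType) (u : I -> algC) : nrm2 u = 0 -> forall i, u i = 0.
Proof.
move=> h i; have := (psumr_eq0P (P := predT) (F := fun i => u i * (u i)^*)).
move=> /(_ (fun i _ => mul_conjC_ge0 (u i)) h i isT) /eqP.
by rewrite mul_conjC_eq0 => /eqP.
Qed.

Lemma schmidt (X1 X2 : finType) (alpha : X1 * X2 -> algC) :
  exists (s : 'I_#|X1| -> algC) (e : 'I_#|X1| -> X1 -> algC) (f : 'I_#|X1| -> X2 -> algC),
  [/\ forall r, 0 <= s r, orthf e, orthf f,
      (forall i j, alpha (i, j) = \sum_r s r * e r i * f r j) &
      \sum_r s r * s r = nrm2 alpha].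
Proof.
pose rho (i i' : X1) := \sum_j alpha (i, j) * (alpha (i', j))^*.
have hpsd : psd rho.
  split.
    move=> i i'; rewrite /rho rmorph_sum; apply: eq_bigr => j _.
    by rewrite rmorphM /= conjCK mulrC.
  move=> v.
  have -> : \sum_i \sum_j (v i)^* * rho i j * v j =
      \sum_j (\sum_i (v i)^* * alpha (i, j)) * (\sum_i (v i)^* * alpha (i, j))^*.
    rewrite /rho.
    transitivity (\sum_i \sum_i' \sum_j (v i)^* * alpha (i, j) * ((v i')^* * alpha (i', j))^*).
      apply: eq_bigr => i _; apply: eq_bigr => i' _; rewrite mulr_sumr mulr_suml.
      by apply: eq_bigr => j _; rewrite !rmorphM /= conjCK; ring.
    symmetry; under eq_bigr => j _ do rewrite rmorph_sum big_distrlr /=.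
    rewrite exchange_big; apply: eq_bigr => i _; rewrite exchange_big.
    by apply: eq_bigr => i' _.
  by apply: sum_ge0 => j; apply: mul_conjC_ge0.
have [d [e [d0 eorth ecompl rhoE]]] := spectral_op hpsd.
pose g r j := \sum_i (e r i)^* * alpha (i, j).
have gorth : forall r r', \sum_j g r j * (g r' j)^* = (r == r')%:R * d r.
  move=> r r'.
  transitivity (\sum_i \sum_i' (e r i)^* * e r' i' * rho i i').
    rewrite /g /rho.
    under eq_bigr => j _ do rewrite rmorph_sum big_distrlr /=.
    rewrite exchange_big; apply: eq_bigr => i _; rewrite exchange_big.
    apply: eq_bigr => i' _; rewrite mulr_sumr; apply: eq_bigr => j _.
    by rewrite !rmorphM /= conjCK; ring.
  transitivity (\sum_q d q * (\sum_i (e r i)^* * e q i) * (\sum_i' e r' i' * (e q i')^*)).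
    under eq_bigr => i _ do under eq_bigr => i' _ do rewrite rhoE mulr_sumr.
    under eq_bigr => i _ do rewrite exchange_big.
    rewrite exchange_big; apply: eq_bigr => q _.
    rewrite -mulrA big_distrlr mulr_sumr; apply: eq_bigr => i _.
    rewrite mulr_sumr; apply: eq_bigr => i' _; rewrite /=; ring.
  have h1 : forall q, \sum_i (e r i)^* * e q i = (q == r)%:R.
    move=> q; rewrite -eorth; apply: eq_bigr => i _; exact: mulrC.
  under eq_bigr => q _ do rewrite h1 eorth.
  rewrite (bigD1 r) //= eqxx mulr1 [X in _ + X]big1 ?addr0.
    by rewrite mulrC eq_sym.
  by move=> q /negbTE ->; rewrite mulr0 mul0r.
pose s r := sqrtC (d r).
have s0 : forall r, 0 <= s r by move=> r; rewrite sqrtC_ge0.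
have ss : forall r, s r * s r = d r by move=> r; rewrite -expr2 sqrtCK.
pose f r j := (s r)^-1 * g r j.
have forth : forall r r', \sum_j f r j * (f r' j)^* = (r == r')%:R * ((d r != 0)%:R).
  move=> r r'.
  transitivity ((s r)^-1 * (s r')^-1 * \sum_j g r j * (g r' j)^*).
    rewrite mulr_sumr; apply: eq_bigr => j _; rewrite /f rmorphM /=.
    rewrite [((s r')^-1)^*]ge0_conj ?invr_ge0 //; ring.
  rewrite gorth; case: (r =P r') => [<-|_]; last by rewrite !mul0r mulr0.
  rewrite /= !mul1r; case: (d r =P 0) => [->|/eqP dn]; first by rewrite mulr0.
  have sn : s r != 0 by rewrite sqrtC_eq0.
  by rewrite /= -ss; field.
exists s, e, f; split => //.
- split; last by move=> I; rewrite /nrm2 eorth eqxx.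
  by move=> I I'; rewrite /nrm2 !eorth eqxx mulr1.
- split.
    by move=> I I'; rewrite /nrm2 !forth eqxx mul1r.
  move=> I; rewrite /nrm2 forth eqxx mul1r.
  by case: (d I != 0); rewrite /= ?lexx ?ler01.
- move=> i j.
  have hg : forall r, s r * e r i * f r j = e r i * g r j.
    move=> r; rewrite /f; case: (d r =P 0) => [d0r|/eqP dn].
      have gz : g r j = 0.
        apply: (nrm2_eq0 (u := g r)); rewrite /nrm2 gorth eqxx mul1r d0r //.
      have sz : s r = 0 by rewrite /s d0r sqrtC0.
      by rewrite gz sz !mul0r mulr0.
    have sn : s r != 0 by rewrite sqrtC_eq0.
    by field.
  under eq_bigr => r _ do rewrite hg.
  rewrite /g.
  under eq_bigr => r _ do rewrite mulr_sumr.
  rewrite exchange_big (bigD1 i) //= [X in _ + X]big1 ?addr0.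
    have -> : \sum_r e r i * ((e r i)^* * alpha (i, j)) =
              (\sum_r e r i * (e r i)^*) * alpha (i, j).
      by rewrite mulr_suml; apply: eq_bigr => r _; rewrite mulrA.
    by rewrite ecompl eqxx mul1r.
  move=> i' ni.
  have -> : \sum_r e r i * ((e r i')^* * alpha (i', j)) =
            (\sum_r e r i * (e r i')^*) * alpha (i', j).
    by rewrite mulr_suml; apply: eq_bigr => r _; rewrite mulrA.
  by rewrite ecompl eq_sym (negbTE ni) mul0r.
- transitivity (\sum_r d r); first by apply: eq_bigr => r _; rewrite ss.
  transitivity (\sum_i rho i i).
    transitivity (\sum_i \sum_q d q * e q i * (e q i)^*); last first.
      by apply: eq_bigr => i _; rewrite rhoE.
    rewrite [RHS]exchange_big; apply: eq_bigr => q _.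
    transitivity (d q * \sum_i e q i * (e q i)^*); first by rewrite eorth eqxx mulr1.
    by rewrite mulr_sumr; apply: eq_bigr => i _; rewrite mulrA.
  rewrite /rho /nrm2.
  by rewrite -(sum_pair (fun i j => alpha (i, j) * (alpha (i, j))^*)); apply: eq_bigr => -[i j].
Qed.

Lemma rsq_ge0 (x : algC) : x \is Num.real -> 0 <= x * x.
Proof. by move=> /conj_Creal h; rewrite -{2}h mul_conjC_ge0. Qed.

Lemma rdiff_sq (x y : algC) : 0 <= x -> 0 <= y -> 0 <= (x - y) * (x - y).
Proof. by move=> hx hy; apply: rsq_ge0; apply: realB; apply: ger0_real. Qed.

Lemma amgm3 (x y z : algC) : 0 <= x -> 0 <= y -> 0 <= z ->
  27%:R * (x * y * z) <= (x + y + z) ^+ 3.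
Proof.
move=> hx hy hz; rewrite -subr_ge0.
have -> : (x + y + z) ^+ 3 - 27%:R * (x * y * z) =
   (x + y + z) * ((x - y) * (x - y) + (y - z) * (y - z) + (z - x) * (z - x)) / 2%:R
   + 3%:R * (y * ((x - z) * (x - z)) + x * ((y - z) * (y - z)) + z * ((x - y) * (x - y))).
  by field.
have hS : 0 <= x + y + z by rewrite !addr_ge0.
have h1 : 0 <= (x + y + z) * ((x - y) * (x - y) + (y - z) * (y - z) + (z - x) * (z - x)) / 2%:R.
  apply: divr_ge0; last by rewrite ler0n.
  by apply: mulr_ge0 => //; rewrite !addr_ge0 ?rdiff_sq.
have h2 : 0 <= 3%:R * (y * ((x - z) * (x - z)) + x * ((y - z) * (y - z)) + z * ((x - y) * (x - y))).
  apply: mulr_ge0; first by rewrite ler0n.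
  by rewrite !addr_ge0 // mulr_ge0 ?rdiff_sq.
exact: addr_ge0 h1 h2.
Qed.

Lemma poly1 (m : algC) : 0 <= m -> 2048%:R * m ^+ 3 <= (6%:R * m + 1) ^+ 4.
Proof.
move=> hm; rewrite -subr_ge0.
have -> : (6%:R * m + 1) ^+ 4 - 2048%:R * m ^+ 3 =
   ((2%:R * m - 1) * (2%:R * m - 1)) * (324%:R * (m * m) + 28%:R * m + 1).
  ring.
apply: mulr_ge0.
  apply: rsq_ge0; apply: realB; last exact: real1.
  by apply: ger0_real; apply: mulr_ge0 => //; rewrite ler0n.
rewrite !addr_ge0 ?ler01 // mulr_ge0 ?ler0n ?mulr_ge0 //.
Qed.

Lemma nneg_sq_le (a b : algC) : 0 <= a -> 0 <= b -> a ^+ 2 <= b ^+ 2 -> a <= b.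
Proof. by move=> ha hb; rewrite ler_pXn2r // qualifE /=. Qed.

Lemma nneg_4_le (a b : algC) : 0 <= a -> 0 <= b -> a ^+ 4 <= b ^+ 4 -> a <= b.
Proof. by move=> ha hb; rewrite ler_pXn2r // qualifE /=. Qed.

Lemma root_bound (p x y z : algC) : 0 <= p -> 0 <= x -> 0 <= y -> 0 <= z ->
  p * p <= x * y * z ->
  sqrtC p <= sqrtC (sqrtC 2%:R) * (2%:R * (x + y + z) + 1) / 8%:R.
Proof.
move=> hp hx hy hz hpp.
set w := sqrtC (sqrtC 2%:R).
have w0 : 0 <= w by rewrite !sqrtC_ge0 ler0n.
have w4 : w ^+ 4 = 2%:R by rewrite (_ : 4 = 2 * 2)%N // exprM sqrtCK sqrtCK.
set S := x + y + z.
have S0 : 0 <= S by rewrite !addr_ge0.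
apply: nneg_4_le; first by rewrite sqrtC_ge0.
  by apply: divr_ge0; rewrite ?ler0n // mulr_ge0 // addr_ge0 ?ler01 // mulr_ge0 ?ler0n.
have -> : sqrtC p ^+ 4 = p * p by rewrite (_ : 4 = 2 * 2)%N // exprM sqrtCK expr2.
apply: (le_trans hpp).
pose m := S / 3%:R.
have m0 : 0 <= m by apply: divr_ge0; rewrite ?ler0n.
have h1 : x * y * z <= m ^+ 3.
  have := amgm3 hx hy hz; rewrite -/S => h.
  rewrite /m expr_div_n -(ler_pM2l (_ : 0 < 27%:R)) ?ltr0n //.
  apply: (le_trans h); rewrite le_eqVlt; apply/orP; left; apply/eqP; by field.
apply: (le_trans h1).
have h2 := poly1 m0.
have -> : (w * (2%:R * S + 1) / 8%:R) ^+ 4 = w ^+ 4 * (6%:R * m + 1) ^+ 4 / 4096%:R.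
  rewrite /m; by field.
rewrite w4 -(ler_pM2l (_ : 0 < 2048%:R)) ?ltr0n //.
apply: (le_trans h2); rewrite le_eqVlt; apply/orP; left; apply/eqP; by field.
Qed.

Lemma scalar_bound (p0 p1 c x0 y0 z0 x1 y1 z1 : algC) :
  0 <= p0 -> 0 <= p1 -> c * c^* <= p0 * p1 ->
  0 <= x0 -> 0 <= y0 -> 0 <= z0 -> 0 <= x1 -> 0 <= y1 -> 0 <= z1 ->
  x0 + x1 <= 1 -> y0 + y1 <= 1 -> z0 + z1 <= 1 ->
  p0 * p0 <= x0 * y0 * z0 -> p1 * p1 <= x1 * y1 * z1 ->
  p0 + p1 + c + c^* <= sqrtC 2%:R.
Proof.
move=> hp0 hp1 hc hx0 hy0 hz0 hx1 hy1 hz1 hx hy hz h0 h1.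
set u := sqrtC p0; set v := sqrtC p1.
have u0 : 0 <= u by rewrite sqrtC_ge0.
have v0 : 0 <= v by rewrite sqrtC_ge0.
have hcc : c + c^* <= 2%:R * (u * v).
  have hn : `|c| <= u * v.
    apply: nneg_sq_le => //; first exact: mulr_ge0.
    by rewrite normCK exprMn !sqrtCK.
  have hr : c + c^* \is Num.real.
    by apply/CrealP; rewrite rmorphD /= conjCK addrC.
  apply: (le_trans (real_ler_norm hr)); apply: (le_trans (ler_normD _ _)).
  rewrite norm_conjC -mulr2n -[_ *+ 2]mulr_natl; apply: ler_wpM2l => //; by rewrite ler0n.
have hsq : p0 + p1 + c + c^* <= (u + v) ^+ 2.
  rewrite -addrA; apply: (@le_trans _ _ (p0 + p1 + 2%:R * (u * v))); first by rewrite lerD2l.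
  have -> : (u + v) ^+ 2 = u ^+ 2 + v ^+ 2 + 2%:R * (u * v) by ring.
  by rewrite !sqrtCK.
apply: (le_trans hsq).
pose w : algC := sqrtC (sqrtC 2%:R).
have w0 : 0 <= w by rewrite !sqrtC_ge0 ler0n.
have hu := root_bound hp0 hx0 hy0 hz0 h0.
have hv := root_bound hp1 hx1 hy1 hz1 h1.
have huv : u + v <= w.
  apply: (le_trans (lerD hu hv)).
  rewrite -mulrDl -mulrDr -(ler_pM2r (_ : 0 < 8%:R)) ?ltr0n // mulfVK ?pnatr_eq0 //.
  apply: ler_wpM2l => //.
  have -> : 2%:R * (x0 + y0 + z0) + 1 + (2%:R * (x1 + y1 + z1) + 1) =
            2%:R * ((x0 + x1) + (y0 + y1) + (z0 + z1)) + 2%:R by ring.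
  have -> : (8%:R : algC) = 2%:R * (1 + 1 + 1) + 2%:R by ring.
  by rewrite lerD2r ler_pM2l ?ltr0n // !lerD.
have -> : sqrtC 2%:R = w ^+ 2 by rewrite sqrtCK.
by rewrite ler_pXn2r // qualifE /= ?addr_ge0.
Qed.

Lemma sum_qubit (F : qubit -> algC) : \sum_j F j = F ord0 + F ord_max.
Proof.
rewrite big_ord_recl big_ord1; congr (_ + F _); exact: val_inj.
Qed.

Lemma tri_reindex (A1 A2 B1 B2 C1 C2 : finType) (H : A1 * A2 -> B1 * B2 -> C1 * C2 -> algC) :
  \sum_ia \sum_ib \sum_ic H ia ib ic =
  \sum_(uA : B1 * C1) \sum_(uB : A1 * C2) \sum_(uC : A2 * B2)
      H (uB.1, uC.1) (uA.1, uC.2) (uA.2, uB.2).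
Proof.
rewrite (flat3 H) (flat3 (fun uA uB uC => H (uB.1, uC.1) (uA.1, uC.2) (uA.2, uB.2))).
pose sig (w : B1 * C1 * (A1 * C2) * (A2 * B2)) :=
  ((w.1.2.1, w.2.1), (w.1.1.1, w.2.2), (w.1.1.2, w.1.2.2)).
pose sigi (p : A1 * A2 * (B1 * B2) * (C1 * C2)) :=
  ((p.1.2.1, p.2.1), (p.1.1.1, p.2.2), (p.1.1.2, p.1.2.2)).
rewrite (reindex sig) /=; last first.
  by exists sigi => [[[[? ?] [? ?]] [? ?]]|[[[? ?] [? ?]] [? ?]]] _.
by apply: eq_bigr => [[[[? ?] [? ?]] [? ?]]].
Qed.

Definition PhiO (A1 A2 B1 B2 C1 C2 KA KB KC : finType)
  (kA : KA -> qubit -> B1 * C1 -> algC) (kB : KB -> qubit -> A1 * C2 -> algC)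
  (kC : KC -> qubit -> A2 * B2 -> algC)
  (al : A1 * A2 -> algC) (be : B1 * B2 -> algC) (ga : C1 * C2 -> algC) (s : qubit) k1 k2 k3 :=
  \sum_ia \sum_ib \sum_ic al ia * be ib * ga ic * kA k1 s (ib.1, ic.1) *
     kB k2 s (ia.1, ic.2) * kC k3 s (ia.2, ib.2).

Lemma PhiO_expand (A1 A2 B1 B2 C1 C2 KA KB KC Ra Rb Rc : finType)
  (kA : KA -> qubit -> B1 * C1 -> algC) (kB : KB -> qubit -> A1 * C2 -> algC)
  (kC : KC -> qubit -> A2 * B2 -> algC)
  (al : A1 * A2 -> algC) (be : B1 * B2 -> algC) (ga : C1 * C2 -> algC)
  (sa : Ra -> algC) (ea : Ra -> A1 -> algC) (fa : Ra -> A2 -> algC)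
  (sb : Rb -> algC) (eb : Rb -> B1 -> algC) (fb : Rb -> B2 -> algC)
  (sc : Rc -> algC) (ec : Rc -> C1 -> algC) (fc : Rc -> C2 -> algC)
  (hal : forall i j, al (i, j) = \sum_r sa r * ea r i * fa r j)
  (hbe : forall i j, be (i, j) = \sum_r sb r * eb r i * fb r j)
  (hga : forall i j, ga (i, j) = \sum_r sc r * ec r i * fc r j) s k1 k2 k3 :
  PhiO kA kB kC al be ga s k1 k2 k3 =
  \sum_(q : Ra * Rb * Rc) sa q.1.1 * sb q.1.2 * sc q.2 *
     amp (fun k u => kA k s u) (phiP eb ec) k1 (q.1.2, q.2) *
     amp (fun k u => kB k s u) (phiP ea fc) k2 (q.1.1, q.2) *
     amp (fun k u => kC k s u) (phiP fa fb) k3 (q.1.1, q.1.2).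
Proof.
rewrite /PhiO.
have hprod : forall (ia : A1 * A2) (ib : B1 * B2) (ic : C1 * C2),
   al ia * be ib * ga ic = \sum_(q : Ra * Rb * Rc) sa q.1.1 * sb q.1.2 * sc q.2 *
      (ea q.1.1 ia.1 * fa q.1.1 ia.2 * eb q.1.2 ib.1 * fb q.1.2 ib.2 *
       ec q.2 ic.1 * fc q.2 ic.2).
  move=> [i1 i2] [j1 j2] [l1 l2]; rewrite hal hbe hga /=.
  rewrite -(flat3 (fun r t v => sa r * sb t * sc v *
     (ea r i1 * fa r i2 * eb t j1 * fb t j2 * ec v l1 * fc v l2))).
  rewrite -[X in X * _ * _]mul1r -sum3_prod; apply: eq_bigr => r _.
  apply: eq_bigr => t _; apply: eq_bigr => v _; ring.
transitivity (\sum_ia \sum_ib \sum_ic \sum_(q : Ra * Rb * Rc) sa q.1.1 * sb q.1.2 * sc q.2 *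
   ((ea q.1.1 ia.1 * fa q.1.1 ia.2 * eb q.1.2 ib.1 * fb q.1.2 ib.2 *
       ec q.2 ic.1 * fc q.2 ic.2) *
    (kA k1 s (ib.1, ic.1) * kB k2 s (ia.1, ic.2) * kC k3 s (ia.2, ib.2)))).
  apply: eq_bigr => ia _; apply: eq_bigr => ib _; apply: eq_bigr => ic _.
  have -> : al ia * be ib * ga ic * kA k1 s (ib.1, ic.1) * kB k2 s (ia.1, ic.2) *
     kC k3 s (ia.2, ib.2) = (al ia * be ib * ga ic) *
     (kA k1 s (ib.1, ic.1) * kB k2 s (ia.1, ic.2) * kC k3 s (ia.2, ib.2)) by ring.
  rewrite hprod mulr_suml.
  by apply: eq_bigr => q _; ring.
transitivity (\sum_(q : Ra * Rb * Rc) sa q.1.1 * sb q.1.2 * sc q.2 *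
  \sum_ia \sum_ib \sum_ic ((ea q.1.1 ia.1 * fa q.1.1 ia.2 * eb q.1.2 ib.1 * fb q.1.2 ib.2 *
       ec q.2 ic.1 * fc q.2 ic.2) *
    (kA k1 s (ib.1, ic.1) * kB k2 s (ia.1, ic.2) * kC k3 s (ia.2, ib.2)))).
  rewrite (flat3 (fun ia ib ic => \sum_(q : Ra * Rb * Rc) _)) exchange_big /=.
  apply: eq_bigr => q _; rewrite (flat3 (fun ia ib ic => _)) mulr_sumr.
  by apply: eq_bigr.
apply: eq_bigr => q _; rewrite -!mulrA; congr (_ * (_ * (_ * _))).
rewrite tri_reindex /= /amp /phiP.
rewrite mulrA -[X in _ = X * _ * _]mul1r -sum3_prod; apply: eq_bigr => uA _; apply: eq_bigr => uB _.
apply: eq_bigr => uC _; rewrite /= -!surjective_pairing; ring.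
Qed.

Lemma gram_diag_ge0 (K U J : finType) (kap : K -> U -> algC) (phi : J -> U -> algC) I :
  0 <= gram kap phi I I.
Proof. by apply: sum_ge0 => k; apply: mul_conjC_ge0. Qed.

Lemma qP_ge0 (K U R1 R2 : finType) (kap : K -> U -> algC) (s1 : R1 -> algC) (s2 : R2 -> algC)
  (phi : R1 * R2 -> U -> algC) : (forall r, 0 <= s1 r) -> (forall r, 0 <= s2 r) ->
  0 <= qP kap s1 s2 phi.
Proof.
move=> h1 h2; apply: sum_ge0 => I; apply: mulr_ge0; last exact: gram_diag_ge0.
by apply: mulr_ge0; apply: mulr_ge0.
Qed.

Lemma qsum (K U R1 R2 : finType) (kr : K -> qubit -> U -> algC)
  (hc : forall i i', \sum_k \sum_j (kr k j i)^* * kr k j i' = (i == i')%:R)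
  (s1 : R1 -> algC) (s2 : R2 -> algC) (h1 : forall r, 0 <= s1 r) (h2 : forall r, 0 <= s2 r)
  (n1 : \sum_r s1 r * s1 r = 1) (n2 : \sum_r s2 r * s2 r = 1)
  (phi : R1 * R2 -> U -> algC) (hphi : orthf phi) :
  qP (fun k u => kr k ord0 u) s1 s2 phi + qP (fun k u => kr k ord_max u) s1 s2 phi <= 1.
Proof.
rewrite /qP -big_split /=.
have hg : forall I, gram (fun k u => kr k ord0 u) phi I I + gram (fun k u => kr k ord_max u) phi I I
                    = nrm2 (phi I).
  move=> I; rewrite /gram /amp -big_split /=.
  transitivity (\sum_k \sum_j (\sum_u kr k j u * phi I u) * (\sum_u kr k j u * phi I u)^*).
    by apply: eq_bigr => k _; rewrite sum_qubit.
  transitivity (\sum_u \sum_u' phi I u * (phi I u')^* * \sum_k \sum_j (kr k j u')^* * kr k j u).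
    under eq_bigr => k _ do under eq_bigr => j _ do rewrite rmorph_sum big_distrlr /=.
    under eq_bigr => k _ do rewrite exchange_big.
    rewrite exchange_big; apply: eq_bigr => u _.
    under eq_bigr => k _ do rewrite exchange_big.
    rewrite exchange_big; apply: eq_bigr => u' _.
    rewrite mulr_sumr; apply: eq_bigr => k _; rewrite mulr_sumr; apply: eq_bigr => j _.
    rewrite rmorphM /=; ring.
  rewrite /nrm2; apply: eq_bigr => u _.
  under eq_bigr => u' _ do rewrite hc.
  rewrite (bigD1 u) //= eqxx mulr1 [X in _ + X]big1 ?addr0 //.
  by move=> u' nu; rewrite (negbTE nu) mulr0.
under eq_bigr => I _ do rewrite -mulrDr hg.
apply: (@le_trans _ _ (\sum_(I : R1 * R2) (s1 I.1 * s2 I.2) * (s1 I.1 * s2 I.2))).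
  apply: ler_sum => I _; rewrite -[X in _ <= X]mulr1; apply: ler_wpM2l.
    by apply: mulr_ge0; apply: mulr_ge0.
  by case: hphi.
rewrite (sum_pair (fun a b => s1 a * s2 b * (s1 a * s2 b))).
have -> : \sum_a \sum_b s1 a * s2 b * (s1 a * s2 b) = (\sum_a s1 a * s1 a) * (\sum_b s2 b * s2 b).
  rewrite big_distrlr /=; apply: eq_bigr => a _; apply: eq_bigr => b _; ring.
by rewrite n1 n2 mulr1.
Qed.

Lemma CS3 (K1 K2 K3 : finType) (a b : K1 -> K2 -> K3 -> algC) :
  (\sum_k1 \sum_k2 \sum_k3 a k1 k2 k3 * (b k1 k2 k3)^*) *
  (\sum_k1 \sum_k2 \sum_k3 a k1 k2 k3 * (b k1 k2 k3)^*)^*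
  <= (\sum_k1 \sum_k2 \sum_k3 a k1 k2 k3 * (a k1 k2 k3)^*) *
     (\sum_k1 \sum_k2 \sum_k3 b k1 k2 k3 * (b k1 k2 k3)^*).
Proof.
rewrite !(flat3 (fun k1 k2 k3 => _ k1 k2 k3 * (_ k1 k2 k3)^*)).
exact: (CS (fun q => a q.1.1 q.1.2 q.2) (fun q => b q.1.1 q.1.2 q.2)).
Qed.

Lemma pure_bound (A1 A2 B1 B2 C1 C2 KA KB KC : finType)
  (kA : KA -> qubit -> B1 * C1 -> algC) (kB : KB -> qubit -> A1 * C2 -> algC)
  (kC : KC -> qubit -> A2 * B2 -> algC)
  (hA : forall i i', \sum_k \sum_j (kA k j i)^* * kA k j i' = (i == i')%:R)
  (hB : forall i i', \sum_k \sum_j (kB k j i)^* * kB k j i' = (i == i')%:R)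
  (hC : forall i i', \sum_k \sum_j (kC k j i)^* * kC k j i' = (i == i')%:R)
  (al : A1 * A2 -> algC) (be : B1 * B2 -> algC) (ga : C1 * C2 -> algC)
  (nal : nrm2 al = 1) (nbe : nrm2 be = 1) (nga : nrm2 ga = 1) :
  \sum_k1 \sum_k2 \sum_k3
    (PhiO kA kB kC al be ga ord0 k1 k2 k3 + PhiO kA kB kC al be ga ord_max k1 k2 k3) *
    (PhiO kA kB kC al be ga ord0 k1 k2 k3 + PhiO kA kB kC al be ga ord_max k1 k2 k3)^*
  <= sqrtC 2%:R.
Proof.
have [sa [ea [fa [hsa hea hfa hal nsa]]]] := schmidt al.
have [sb [eb [fb [hsb heb hfb hbe nsb]]]] := schmidt be.
have [sc [ec [fc [hsc hec hfc hga nsc]]]] := schmidt ga.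
rewrite nal in nsa; rewrite nbe in nsb; rewrite nga in nsc.
set Phi := PhiO kA kB kC al be ga.
pose P s := \sum_k1 \sum_k2 \sum_k3 Phi s k1 k2 k3 * (Phi s k1 k2 k3)^*.
pose c := \sum_k1 \sum_k2 \sum_k3 Phi ord0 k1 k2 k3 * (Phi ord_max k1 k2 k3)^*.
have P0 : forall s, 0 <= P s.
  by move=> s; apply: sum_ge0 => k1; apply: sum_ge0 => k2; apply: sum_ge0 => k3;
     apply: mul_conjC_ge0.
have hfin : forall s, P s * P s <=
   qP (fun k u => kA k s u) sb sc (phiP eb ec) *
   qP (fun k u => kB k s u) sa sc (phiP ea fc) *
   qP (fun k u => kC k s u) sa sb (phiP fa fb).
  move=> s.
  apply: (finner hsa hsb hsc hea hfa heb hfb hec hfc (kraus_contr hA s) (kraus_contr hB s)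
     (kraus_contr hC s)).
  rewrite /P; apply: eq_bigr => k1 _; apply: eq_bigr => k2 _; apply: eq_bigr => k3 _.
  by rewrite /Phi (PhiO_expand _ _ _ hal hbe hga).
have hc : c * c^* <= P ord0 * P ord_max by apply: CS3.
have hexp : \sum_k1 \sum_k2 \sum_k3 (Phi ord0 k1 k2 k3 + Phi ord_max k1 k2 k3) *
    (Phi ord0 k1 k2 k3 + Phi ord_max k1 k2 k3)^* = P ord0 + P ord_max + c + c^*.
  rewrite /P /c !rmorph_sum -!big_split /=; apply: eq_bigr => k1 _.
  rewrite !rmorph_sum -!big_split /=; apply: eq_bigr => k2 _.
  rewrite !rmorph_sum -!big_split /=; apply: eq_bigr => k3 _.
  rewrite !rmorphD !rmorphM /= conjCK; ring.
rewrite hexp.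
have q0 := fun K U R1 R2 kap s1 s2 phi => @qP_ge0 K U R1 R2 kap s1 s2 phi.
apply: (scalar_bound (P0 ord0) (P0 ord_max) hc _ _ _ _ _ _ _ _ _ (hfin ord0) (hfin ord_max)).
- exact: q0.
- exact: q0.
- exact: q0.
- exact: q0.
- exact: q0.
- exact: q0.
- exact (qsum hA hsb hsc nsb nsc (orthf_prod heb hec)).
- exact (qsum hB hsa hsc nsa nsc (orthf_prod hea hfc)).
- exact (qsum hC hsa hsb nsa nsb (orthf_prod hfa hfb)).
Qed.

Lemma reindex6 (A B C : finType) (F : A -> A -> B -> B -> C -> C -> algC) :
  \sum_a \sum_a' \sum_b \sum_b' \sum_c \sum_c' F a a' b b' c c' =
  \sum_(Q : A * B * C) \sum_(Q' : A * B * C) F Q.1.1 Q'.1.1 Q.1.2 Q'.1.2 Q.2 Q'.2.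
Proof.
rewrite (reindex_qq (fun Q Q' => F Q.1.1 Q'.1.1 Q.1.2 Q'.1.2 Q.2 Q'.2)) /=.
rewrite (sum_pair (fun a a' => \sum_(y : B * B) \sum_(z : C * C) F a a' y.1 y.2 z.1 z.2)).
apply: eq_bigr => a _; apply: eq_bigr => a' _.
rewrite (sum_pair (fun b b' => \sum_(z : C * C) F a a' b b' z.1 z.2)).
apply: eq_bigr => b _; apply: eq_bigr => b' _.
by rewrite (sum_pair (fun c c' => F a a' b b' c c')).
Qed.

Lemma chan_munit (I : finType) (K : finType) (kr : K -> qubit -> I -> algC)
  (E : op I -> op qubit)
  (hE : forall rho j j', E rho j j' = \sum_k \sum_i \sum_i' kr k j i * rho i i' * (kr k j' i')^*)
  (u u' : I) (j j' : qubit) :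
  E (munit u u') j j' = \sum_k kr k j u * (kr k j' u')^*.
Proof.
rewrite hE; apply: eq_bigr => k _.
rewrite (bigD1 u) //= [X in _ + X]big1 ?addr0; last first.
  move=> i ni; apply: big1 => i' _; rewrite /munit (negbTE ni) /= mulr0 mul0r //.
rewrite (bigD1 u') //= [X in _ + X]big1 ?addr0; last first.
  move=> i' ni; rewrite /munit (negbTE ni) andbF mulr0 mul0r //.
by rewrite /munit !eqxx /= mulr1.
Qed.

Lemma expandPhi2 (K1 K2 K3 Q : finType) (G G' : K1 -> K2 -> K3 -> Q -> algC) :
  \sum_k1 \sum_k2 \sum_k3 (\sum_q G k1 k2 k3 q) * (\sum_q G' k1 k2 k3 q)^*
  = \sum_q \sum_q' \sum_k1 \sum_k2 \sum_k3 G k1 k2 k3 q * (G' k1 k2 k3 q')^*.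
Proof.
rewrite (flat3 (fun k1 k2 k3 => (\sum_q G k1 k2 k3 q) * (\sum_q G' k1 k2 k3 q)^*)).
transitivity (\sum_q \sum_q' \sum_(k : K1 * K2 * K3) G k.1.1 k.1.2 k.2 q * (G' k.1.1 k.1.2 k.2 q')^*).
  under eq_bigr => k _ do rewrite rmorph_sum big_distrlr /=.
  by rewrite exchange_big; apply: eq_bigr => q _; rewrite exchange_big.
apply: eq_bigr => q _; apply: eq_bigr => q' _.
by rewrite (flat3 (fun k1 k2 k3 => G k1 k2 k3 q * (G' k1 k2 k3 q')^*)).
Qed.

Lemma tri_expand (A1 A2 B1 B2 C1 C2 KA KB KC Ma Mb Mc : finType)
  (kA : KA -> qubit -> B1 * C1 -> algC) (kB : KB -> qubit -> A1 * C2 -> algC)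
  (kC : KC -> qubit -> A2 * B2 -> algC)
  (EA : op (B1 * C1)%type -> op qubit) (EB : op (A1 * C2)%type -> op qubit) (EC : op (A2 * B2)%type -> op qubit)
  (hEA : forall rho j j', EA rho j j' = \sum_k \sum_i \sum_i' kA k j i * rho i i' * (kA k j' i')^*)
  (hEB : forall rho j j', EB rho j j' = \sum_k \sum_i \sum_i' kB k j i * rho i i' * (kB k j' i')^*)
  (hEC : forall rho j j', EC rho j j' = \sum_k \sum_i \sum_i' kC k j i * rho i i' * (kC k j' i')^*)
  (ra : op (A1 * A2)%type) (rb : op (B1 * B2)%type) (rc : op (C1 * C2)%type)
  (da : Ma -> algC) (va : Ma -> A1 * A2 -> algC)
  (db : Mb -> algC) (vb : Mb -> B1 * B2 -> algC)
  (dc : Mc -> algC) (vc : Mc -> C1 * C2 -> algC)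
  (hra : forall i j, ra i j = \sum_m da m * va m i * (va m j)^*)
  (hrb : forall i j, rb i j = \sum_m db m * vb m i * (vb m j)^*)
  (hrc : forall i j, rc i j = \sum_m dc m * vc m i * (vc m j)^*)
  (s t : qubit) :
  triangle_out ra rb rc EA EB EC (s, s, s) (t, t, t) =
  \sum_ma \sum_mb \sum_mc da ma * db mb * dc mc *
    \sum_k1 \sum_k2 \sum_k3 PhiO kA kB kC (va ma) (vb mb) (vc mc) s k1 k2 k3 *
                           (PhiO kA kB kC (va ma) (vb mb) (vc mc) t k1 k2 k3)^*.
Proof.
pose KK (Q Q' : A1 * A2 * (B1 * B2) * (C1 * C2)) :=
  (\sum_k kA k s (Q.1.2.1, Q.2.1) * (kA k t (Q'.1.2.1, Q'.2.1))^*) *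
  (\sum_k kB k s (Q.1.1.1, Q.2.2) * (kB k t (Q'.1.1.1, Q'.2.2))^*) *
  (\sum_k kC k s (Q.1.1.2, Q.1.2.2) * (kC k t (Q'.1.1.2, Q'.1.2.2))^*).
transitivity (\sum_Q \sum_Q' ra Q.1.1 Q'.1.1 * rb Q.1.2 Q'.1.2 * rc Q.2 Q'.2 * KK Q Q').
  rewrite /triangle_out /=.
  rewrite (reindex6 (fun ia ia' ib ib' ic ic' => ra ia ia' * rb ib ib' * rc ic ic' *
     EA (munit (ib.1, ic.1) (ib'.1, ic'.1)) s t * EB (munit (ia.1, ic.2) (ia'.1, ic'.2)) s t *
     EC (munit (ia.2, ib.2) (ia'.2, ib'.2)) s t)).
  apply: eq_bigr => Q _; apply: eq_bigr => Q' _.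
  rewrite (chan_munit hEA) (chan_munit hEB) (chan_munit hEC) /KK; ring.
symmetry.
transitivity (\sum_ma \sum_mb \sum_mc da ma * db mb * dc mc *
   \sum_Q \sum_Q' (va ma Q.1.1 * vb mb Q.1.2 * vc mc Q.2) *
        (va ma Q'.1.1 * vb mb Q'.1.2 * vc mc Q'.2)^* * KK Q Q').
  apply: eq_bigr => ma _; apply: eq_bigr => mb _; apply: eq_bigr => mc _.
  congr (_ * _); rewrite /PhiO.
  rewrite (eq_bigr _ (fun k1 _ => eq_bigr _ (fun k2 _ => eq_bigr _ (fun k3 _ =>
     congr2 (fun x y => x * y^*) (flat3 _) (flat3 _))))) /=.
  rewrite expandPhi2; apply: eq_bigr => Q _; apply: eq_bigr => Q' _.
  rewrite /KK !mulrA -sum3_prod; apply: eq_bigr => k1 _; apply: eq_bigr => k2 _.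
  apply: eq_bigr => k3 _; rewrite !rmorphM /=; ring.
rewrite (flat3 (fun ma mb mc => da ma * db mb * dc mc * _)).
transitivity (\sum_Q \sum_Q' \sum_(M : Ma * Mb * Mc) da M.1.1 * db M.1.2 * dc M.2 *
   ((va M.1.1 Q.1.1 * vb M.1.2 Q.1.2 * vc M.2 Q.2) *
    (va M.1.1 Q'.1.1 * vb M.1.2 Q'.1.2 * vc M.2 Q'.2)^* * KK Q Q')).
  under eq_bigr => M _ do rewrite mulr_sumr.
  rewrite exchange_big; apply: eq_bigr => Q _.
  under eq_bigr => M _ do rewrite mulr_sumr.
  by rewrite exchange_big.
apply: eq_bigr => Q _; apply: eq_bigr => Q' _.
rewrite -(flat3 (fun ma mb mc => da ma * db mb * dc mc *
   ((va ma Q.1.1 * vb mb Q.1.2 * vc mc Q.2) *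
    (va ma Q'.1.1 * vb mb Q'.1.2 * vc mc Q'.2)^* * KK Q Q'))).
rewrite hra hrb hrc -[X in _ = X * _ * _ * _]mul1r -sum3_prod mulr_suml.
apply: eq_bigr => ma _; rewrite mulr_suml; apply: eq_bigr => mb _.
rewrite mulr_suml; apply: eq_bigr => mc _.
rewrite !rmorphM /=; ring.
Qed.

Definition gg : algC := (sqrtC 2)^-1.

Lemma gg_ge0 : 0 <= gg.
Proof. by rewrite /gg invr_ge0 sqrtC_ge0 ler0n. Qed.

Lemma ord0_max : (ord0 : qubit) != ord_max.
Proof. by []. Qed.

Lemma ghz_sum (H : qubit3 -> algC) (c : algC -> algC) :
  c gg = gg -> c 0 = 0 ->
  \sum_x c (ghz x) * H x = gg * \sum_s H (s, s, s).
Proof.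
move=> cg c0.
rewrite sum_qubit (bigD1 (ord0, ord0, ord0)) //= (bigD1 (ord_max, ord_max, ord_max)) /=; last first.
  by [].
rewrite [X in _ + (_ + X)]big1 ?addr0.
  rewrite /ghz eqxx /= -/gg.
  by rewrite cg -mulrDr.
move=> x /andP [n1 n0]; rewrite /ghz.
by rewrite (negbTE n0) (negbTE n1) /= c0 mul0r.
Qed.

Lemma fid_reduce (T : op qubit3) :
  ghz_fidelity T = gg * gg * \sum_s \sum_t T (s, s, s) (t, t, t).
Proof.
rewrite /ghz_fidelity.
transitivity (\sum_x (ghz x)^* * (\sum_x' T x x' * ghz x')).
  by apply: eq_bigr => x _; rewrite mulr_sumr; apply: eq_bigr => x' _; rewrite mulrA.
rewrite (@ghz_sum (fun x => \sum_x' T x x' * ghz x') (@Num.conj _)); last first.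
- exact: conjC0.
- exact: ge0_conj gg_ge0.
rewrite -mulrA; congr (_ * _); rewrite mulr_sumr; apply: eq_bigr => s _.
transitivity (\sum_x' id (ghz x') * T (s, s, s) x').
  by apply: eq_bigr => x' _; rewrite mulrC.
by rewrite (@ghz_sum (fun x' => T (s, s, s) x') id).
Qed.

Lemma spec_density (I : finType) (A : op I) : density A ->
  exists (d : 'I_#|I| -> algC) (e : 'I_#|I| -> I -> algC),
   [/\ (forall r, 0 <= d r), (forall r, nrm2 (e r) = 1), \sum_r d r = 1 &
       (forall i j, A i j = \sum_r d r * e r i * (e r j)^*)].
Proof.
move=> [hpsd htr].
have [d [e [d0 eorth ecompl hA]]] := spectral_op hpsd.
have ne : forall r, nrm2 (e r) = 1 by move=> r; rewrite /nrm2 eorth eqxx.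
exists d, e; split => //.
rewrite -htr.
under [RHS]eq_bigr => i _ do rewrite hA.
rewrite exchange_big; apply: eq_bigr => r _.
rewrite -[LHS]mulr1 -(ne r) /nrm2 mulr_sumr; apply: eq_bigr => i _; ring.
Qed.

Lemma per_lambda (A1 A2 B1 B2 C1 C2 : finType)
  (ra : op (A1 * A2)%type) (rb : op (B1 * B2)%type) (rc : op (C1 * C2)%type)
  (EA : op (B1 * C1)%type -> op qubit) (EB : op (A1 * C2)%type -> op qubit)
  (EC : op (A2 * B2)%type -> op qubit) :
  density ra -> density rb -> density rc ->
  is_channel EA -> is_channel EB -> is_channel EC ->
  ghz_fidelity (triangle_out ra rb rc EA EB EC) <= gg.
Proof.
move=> dra drb drc [KA [kA [cA hEA]]] [KB [kB [cB hEB]]] [KC [kC [cC hEC]]].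
have [da [va [da0 nva sda hra]]] := spec_density dra.
have [db [vb [db0 nvb sdb hrb]]] := spec_density drb.
have [dc [vc [dc0 nvc sdc hrc]]] := spec_density drc.
rewrite fid_reduce.
set Phi := fun ma mb mc s k1 k2 k3 => PhiO kA kB kC (va ma) (vb mb) (vc mc) s k1 k2 k3.
have hsum : \sum_s \sum_t triangle_out ra rb rc EA EB EC (s, s, s) (t, t, t) =
  \sum_ma \sum_mb \sum_mc da ma * db mb * dc mc * \sum_k1 \sum_k2 \sum_k3
    (Phi ma mb mc ord0 k1 k2 k3 + Phi ma mb mc ord_max k1 k2 k3) *
    (Phi ma mb mc ord0 k1 k2 k3 + Phi ma mb mc ord_max k1 k2 k3)^*.
  under eq_bigr => s _ do under eq_bigr => t _ do
    rewrite (tri_expand hEA hEB hEC hra hrb hrc).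
  rewrite !sum_qubit -!big_split /=; apply: eq_bigr => ma _.
  rewrite -!big_split /=; apply: eq_bigr => mb _.
  rewrite -!big_split /=; apply: eq_bigr => mc _.
  rewrite -!mulrDr; congr (_ * _).
  rewrite -!big_split /=; apply: eq_bigr => k1 _.
  rewrite -!big_split /=; apply: eq_bigr => k2 _.
  rewrite -!big_split /=; apply: eq_bigr => k3 _.
  rewrite /Phi rmorphD /=; ring.
rewrite hsum.
have gg2 : gg * gg * sqrtC 2%:R = gg.
  have s0 : sqrtC 2%:R != 0 :> algC by rewrite sqrtC_eq0 pnatr_eq0.
  by rewrite /gg; field.
rewrite -[X in _ <= X]gg2; apply: ler_wpM2l; first by apply: mulr_ge0; exact: gg_ge0.
apply: (@le_trans _ _ (\sum_ma \sum_mb \sum_mc da ma * db mb * dc mc * sqrtC 2%:R)).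
  apply: ler_sum => ma _; apply: ler_sum => mb _; apply: ler_sum => mc _.
  apply: ler_wpM2l; first by rewrite !mulr_ge0.
  exact: (pure_bound cA cB cC (nva ma) (nvb mb) (nvc mc)).
have -> : \sum_ma \sum_mb \sum_mc da ma * db mb * dc mc * sqrtC 2%:R =
   (\sum_ma \sum_mb \sum_mc 1 * da ma * db mb * dc mc) * sqrtC 2%:R.
  rewrite mulr_suml; apply: eq_bigr => ma _; rewrite mulr_suml; apply: eq_bigr => mb _.
  by rewrite mulr_suml; apply: eq_bigr => mc _; rewrite mul1r.
by rewrite sum3_prod sda sdb sdc !mul1r.
Qed.

Unset Implicit Arguments.

Theorem mainTheorem7 (rho : op qubit3) :
  triangle_preparable rho -> ghz_fidelity rho <= (sqrtC 2)^-1.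
Proof.
move=> [da1 [da2 [db1 [db2 [dc1 [dc2 [ra [rb [rc [L [p [EA [EB [EC
  [[dra drb drc] hp0 hp1 hch hrho]]]]]]]]]]]]]]].
have -> : ghz_fidelity rho =
    \sum_l p l * ghz_fidelity (triangle_out ra rb rc (EA l) (EB l) (EC l)).
  rewrite /ghz_fidelity.
  transitivity (\sum_x \sum_x' \sum_l p l *
     ((ghz x)^* * triangle_out ra rb rc (EA l) (EB l) (EC l) x x' * ghz x')).
    apply: eq_bigr => x _; apply: eq_bigr => x' _; rewrite hrho mulr_sumr mulr_suml.
    by apply: eq_bigr => l _; ring.
  under eq_bigr => x _ do rewrite exchange_big.
  rewrite exchange_big; apply: eq_bigr => l _.
  rewrite mulr_sumr; apply: eq_bigr => x _; by rewrite mulr_sumr.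
apply: (@le_trans _ _ (\sum_l p l * gg)).
  apply: ler_sum => l _; apply: ler_wpM2l => //.
  by have [ha hb hc] := hch l; apply: per_lambda.
by rewrite -mulr_suml hp1 mul1r.
Qed.
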